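(* Let $L=\mathcal{F}(P)$ be a finite distributive lattice and let $K=[\hat0_K,\hat1_K]$ be a cutting of $L$. Then $$R(L\boxplus K,x)=R_L({\downarrow K},x)+x\,R_L({\uparrow K},x)=R({\downarrow K},x)+x^{h_L(\hat0_K)+1}R({\uparrow K},x).$$
   Context: For a finite poset $P$, $\mathcal{F}(P)$ is the set of filters (up-sets) of $P$ ordered by reverse inclusion; it is a finite distributive lattice with least element $P$ and greatest element $\emptyset$. A cutting of a finite distributive lattice $L$ is an interval $K=[\hat0_K,\hat1_K]$ of $L$ such that every maximal chain of $L$ meets $K$. For a cutting $K$ of $L=\mathcal{F}(P)$, let $S=\hat0_K\setminus\hat1_K$, $S_0$ the set of maximal elements of $P\setminus\hat0_K$, $S_1$ the set of minimal elements of $\hat1_K$. The poset $P_K$ is $P\cup\{x_K\}$ ($x_K$ new) where the order on $P$ is unchanged, $z<x_K$ iff $z\le s$ for some $s\in S_0$, $x_K<y$ iff $y\ge s$ for some $s\in S_1$, and $x_K$ is incomparable to every element of $S$. The convex expansion is $L\boxplus K:=\mathcal{F}(P_K)$. For a finite distributive lattice $M$ and $a\in M$, $h_M(a)$ is the height of $a$ (length of any maximal chain from the least element of $M$ to $a$). For $A\subseteq L$, $R_L(A,x)=\sum_{a\in A}x^{h_L(a)}$, and for a lattice $M$, $R(M,x)=R_M(M,x)=\sum_{a\in M}x^{h_M(a)}$ (rank generating function). Here ${\downarrow K}=\{a\in L: a\le\hat1_K\}$ and ${\uparrow K}=\{a\in L:a\ge\hat0_K\}$, regarded as lattices in their own right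 in $R({\downarrow K},x)$, $R({\uparrow K},x)$. *)

(* Defs.v *)
From HB Require Import structures.
From mathcomp Require Import all_boot all_order all_algebra.
Set Implicit Arguments. Unset Strict Implicit. Unset Printing Implicit Defensive.
Import Order.TTheory GRing.Theory.

Section Defs.
Variable U : finType.

Definition upsetb (r : rel U) (A : {set U}) : bool :=
  [forall x in A, forall y, r x y ==> (y \in A)].

(* Lattices of filters are ordered by REVERSE inclusion: X < Y iff Y \proper X.
   [chainb F b a k]: there is a strictly increasing chain (in reverse
   inclusion) b < t_1 < ... < t_k = a of length k with all t_i in F. *)
Definition chainb (F : pred {set U}) (b a : {set U}) (k : nat) : bool :=
  [exists t : k.-tuple {set U},
     [&& path (fun X Y : {set U} => Y \proper X) b t,
         last b t == a & all F t]].

(* Height of a above the base element b inside the family F: the maximal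
   length of a chain from b to a in F (a strict chain of subsets of U has
   length at most #|U|). *)
Definition height (F : pred {set U}) (b a : {set U}) : nat :=
  \max_(k < #|U|.+1 | chainb F b a k) k.

Definition rgf (F : pred {set U}) (b : {set U}) (A : pred {set U}) : {poly int} :=
  \sum_(a : {set U} | A a) 'X^(height F b a).

Definition is_chain (F : pred {set U}) (C : {set {set U}}) : Prop :=
  (forall X, X \in C -> F X) /\
  (forall X Y, X \in C -> Y \in C -> (X \subset Y) || (Y \subset X)).

Definition is_maximal_chain (F : pred {set U}) (C : {set {set U}}) : Prop :=
  is_chain F C /\ (forall C', is_chain F C' -> C \subset C' -> C' = C).
End Defs.

Section Poset.
Variables (d : Order.disp_t) (T : finPOrderType d).

Definition filters : pred {set T} := fun A => upsetb (fun x y : T => (x <= y)%O) A.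

(* the interval [o, i] of L (reverse inclusion): o <= X <= i iff i ⊆ X ⊆ o *)
Definition in_interval (o i X : {set T}) : bool := (i \subset X) && (X \subset o).

Definition is_cutting (o i : {set T}) : Prop :=
  filters o /\ filters i /\ i \subset o /\
  forall C, is_maximal_chain filters C -> exists2 X, X \in C & in_interval o i X.

Definition S0 (o : {set T}) : {set T} :=
  [set s | (s \notin o) && [forall z, ((s < z)%O && (z \notin o)) ==> false]].
Definition S1 (i : {set T}) : {set T} :=
  [set s | (s \in i) && [forall z, ((z < s)%O && (z \in i)) ==> false]].

(* The order of P_K on option T, None being the new element x_K. *)
Definition leK (o i : {set T}) (u v : option T) : bool :=
  match u, v with
  | Some a, Some b => (a <= b)%O
  | Some z, None => [exists s in S0 o, (z <= s)%O]
  | None, Some y => [exists s in S1 i, (s <= y)%O]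
  | None, None => true
  end.

(* L ⊞ K = F(P_K) *)
Definition filtersK (o i : {set T}) : pred {set option T} :=
  fun A => upsetb (leK o i) A.

Definition downK (i : {set T}) : pred {set T} := fun a => filters a && (i \subset a).
Definition upK (o : {set T}) : pred {set T} := fun a => filters a && (a \subset o).
End Poset.
Arguments filters {d} T.

(* Main.v *)
Require Import Defs.
From mathcomp Require Import all_boot all_order all_algebra zify.
Set Implicit Arguments. Unset Strict Implicit. Unset Printing Implicit Defensive.
Import Order.TTheory GRing.Theory.

Section Gen.
Variable U : finType.

Lemma upsetP (r : rel U) (A : {set U}) :
  reflect (forall x y, x \in A -> r x y -> y \in A) (upsetb r A).
Proof.
apply: (iffP forallP) => [H x y xA rxy | H x].
- by move: (H x); rewrite xA /= => /forallP/(_ y); rewrite rxy.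
- apply/implyP => xA; apply/forallP => y; apply/implyP; exact: H.
Qed.

Lemma chainbP (F : pred {set U}) (b a : {set U}) k :
  reflect (exists s : seq {set U}, [/\ size s = k,
     path (fun X Y : {set U} => Y \proper X) b s, last b s = a & all F s])
  (chainb F b a k).
Proof.
apply: (iffP existsP) => [[t /and3P [p /eqP l al]] | [s [sz p l al]]].
- by exists (val t); split=> //; exact: size_tuple.
- have szk : size s == k by rewrite sz.
  by exists (Tuple szk); rewrite /= p l eqxx al.
Qed.

Lemma chain_card (F : pred {set U}) (b a : {set U}) k : chainb F b a k -> #|a| + k <= #|b|.
Proof.
case/chainbP => s [<- p <- _]; elim: s b p => [|x s IH] b /=; first by rewrite addn0.
case/andP => xb p; have := IH x p; have := proper_card xb; lia.
Qed.

Lemma height_eq (F : pred {set U}) (b a : {set U}) : a \subset b -> F a ->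
  (forall X, F X -> X \proper b -> exists2 x, x \in b :\: X & F (x |: X)) ->
  height F b a = #|b| - #|a|.
Proof.
move=> sab Fa Hext.
have Hc : forall n a, F a -> a \subset b -> #|b| - #|a| = n -> chainb F b a n.
  elim=> [|n IH] a' Fa' sa' hn.
  - have /eqP e : a' == b by rewrite eqEcard sa' /=; lia.
    by apply/chainbP; exists [::]; split.
  - have pa : a' \proper b by rewrite properEcard sa' /=; lia.
    case: (Hext a' Fa' pa) => x; rewrite inE => /andP [xa xb] Fx.
    have sx : x |: a' \subset b by rewrite subUset sub1set xb sa'.
    have cx : #|x |: a'| = #|a'|.+1 by rewrite cardsU1 xa.
    case/chainbP: (IH _ Fx sx ltac:(lia)) => s [sz p l al].
    apply/chainbP; exists (rcons s a'); split.
    + by rewrite size_rcons sz.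
    + rewrite rcons_path p l /= properEcard subsetUr cx; lia.
    + by rewrite last_rcons.
    + by rewrite all_rcons Fa' al.
rewrite /height; apply/eqP; rewrite eqn_leq; apply/andP; split.
- apply/bigmax_leqP => k ck; have := chain_card ck; lia.
- have HN : #|b| - #|a| < #|U|.+1 by have := max_card b; lia.
  apply: (bigop.bigmax_sup (Ordinal HN)) => //=; exact: Hc. 
Qed.

Lemma ext_up (r : rel U) (f : U -> nat) (b X : {set U}) :
  (forall x y, r x y -> x != y -> f x < f y) ->
  upsetb r b -> upsetb r X -> X \proper b ->
  exists2 x, x \in b :\: X & upsetb r (x |: X).
Proof.
move=> hf /upsetP hb /upsetP hX /properP [sXb [x0 x0b x0X]].
have P0 : x0 \in b :\: X by rewrite inE x0X x0b.
case: (arg_maxnP f P0) => x xbX xmax.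
exists x => //; apply/upsetP => z y /setU1P [->|zX] rxy; rewrite in_setU1.
- case: eqVneq => [//|nyx] /=; apply/negPn/negP => yX.
  move: xbX => /setDP [xb xX].
  have ybX : y \in b :\: X by rewrite inE yX (hb _ _ xb rxy).
  have := xmax y ybX; have := hf _ _ rxy; rewrite eq_sym nyx => /(_ isT); lia.
- by rewrite (hX _ _ zX rxy) orbT.
Qed.
End Gen.

Section Pos.
Variables (d : Order.disp_t) (T : finPOrderType d).
Implicit Types (o i B X : {set T}).

Definition rk (x : T) := #|[set z : T | (z < x)%O]|.

Lemma rk_lt (x y : T) : (x < y)%O -> rk x < rk y.
Proof.
move=> xy; apply: proper_card; apply/properP; split.
- by apply/subsetP => z; rewrite !inE => zx; exact: lt_trans zx xy.
- by exists x; rewrite !inE ?xy ?ltxx.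
Qed.

Lemma rk_le (x : T) : rk x <= #|T|.
Proof. exact: max_card. Qed.

Lemma max_out o a : a \notin o -> exists2 s, s \in S0 o & (a <= s)%O.
Proof.
move=> ao.
have P0 : (fun s => (s \notin o) && (a <= s)%O) a by rewrite /= ao lexx.
case: (@arg_maxnP _ a (fun s => (s \notin o) && (a <= s)%O) rk P0) => s /andP [so as_] smax.
exists s => //; rewrite inE so /=; apply/forallP => z; apply/implyP => /andP [sz zo].
have := smax z; rewrite zo (le_trans as_ (ltW sz)) => /(_ isT).
have := rk_lt sz; lia.
Qed.

Lemma min_in i b : b \in i -> exists2 s, s \in S1 i & (s <= b)%O.
Proof.
move=> bi.
have P0 : (fun s => (s \in i) && (s <= b)%O) b by rewrite /= bi lexx.
case: (@arg_minnP _ b (fun s => (s \in i) && (s <= b)%O) rk P0) => s /andP [si sb] smin.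
exists s => //; rewrite inE si /=; apply/forallP => z; apply/implyP => /andP [zs zi].
have := smin z; rewrite zi (le_trans (ltW zs) sb) => /(_ isT).
have := rk_lt zs; lia.
Qed.

Lemma rk_rel : forall x y : T, (x <= y)%O -> x != y -> rk x < rk y.
Proof. by move=> x y xy nxy; apply: rk_lt; rewrite lt_neqAle nxy. Qed.

Lemma inSome (B : {set T}) a : (Some a \in Some @: B) = (a \in B).
Proof. apply: mem_imset; exact: Some_inj. Qed.

Lemma inNone (B : {set T}) : (None \in Some @: B) = false.
Proof. by apply/imsetP => -[]. Qed.

Lemma filtersK_Some o i B : filters T o ->
  filtersK o i (Some @: B) = upK o B.
Proof.
move=> /upsetP fo; rewrite /filtersK /upK /filters.
apply/idP/idP.
- move/upsetP => H; apply/andP; split.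
  + apply/upsetP => x y xB xy; rewrite -inSome; apply: (H (Some x)) => //.
    by rewrite inSome.
  + apply/subsetP => a aB; apply/negPn/negP => ao.
    case: (max_out ao) => s sS as_.
    suff : None \in Some @: B by rewrite inNone.
    apply: (H (Some a)); first by rewrite inSome.
    by apply/existsP; exists s; rewrite sS.
- case/andP => /upsetP fB sBo; apply/upsetP => -[x|] y; last by rewrite inNone.
  rewrite inSome => xB; case: y => [y|] /= xy; first by rewrite inSome (fB _ _ xB xy).
  case/existsP: xy => s /andP [sS xs].
  move: sS; rewrite inE => /andP [so _].
  by rewrite (fo _ _ (subsetP sBo _ xB) xs) in so.
Qed.

Lemma filtersK_None o i B : filters T i ->
  filtersK o i (None |: Some @: B) = downK i B.
Proof.
move=> /upsetP fi; rewrite /filtersK /downK /filters.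
apply/idP/idP.
- move/upsetP => H; apply/andP; split.
  + apply/upsetP => x y xB xy.
    have : Some y \in None |: Some @: B.
      by apply: (H (Some x)) => //; rewrite in_setU1 inSome xB orbT.
    by rewrite in_setU1 inSome.
  + apply/subsetP => b bi; case: (min_in bi) => s sS sb.
    have : Some b \in None |: Some @: B.
      apply: (H None); first by rewrite in_setU1 eqxx.
      by apply/existsP; exists s; rewrite sS.
    by rewrite in_setU1 inSome.
- case/andP => /upsetP fB siB; apply/upsetP => x y; rewrite in_setU1.
  case: y => [y|] xy; last by rewrite in_setU1 eqxx.
  rewrite in_setU1 inSome /=.
  case: x xy => [x|] /=.
  + by rewrite inSome => /fB H /H ->.
  + move=> _ /existsP [s /andP [sS sy]]; apply: (subsetP siB).
    move: sS; rewrite inE => /andP [si _]; exact: fi si sy.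
Qed.

End Pos.

Section Main.
Variables (d : Order.disp_t) (T : finPOrderType d).

Lemma preim_None (B : {set T}) : Some @^-1: (None |: Some @: B) = B.
Proof. by apply/setP => x; rewrite !inE inSome. Qed.
Lemma preim_Some (B : {set T}) : Some @^-1: (Some @: B) = B.
Proof. by apply/setP => x; rewrite !inE inSome. Qed.
Lemma card_Some (B : {set T}) : #|Some @: B| = #|B|.
Proof. apply: card_imset; exact: Some_inj. Qed.
Lemma card_None (B : {set T}) : #|None |: Some @: B| = #|B|.+1.
Proof. by rewrite cardsU1 inNone card_Some. Qed.
Lemma card_optT : #|[set: option T]| = #|T|.+1.
Proof. by rewrite cardsT card_option. Qed.

Definition fK (o : {set T}) (u : option T) : nat :=
  match u with
  | Some a => if a \in o then #|T| + #|T| + 2 + rk a else rk a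
  | None => #|T|.+1
  end.

Lemma fK_rel (o i : {set T}) : filters T o -> i \subset o ->
  forall u v, leK o i u v -> u != v -> fK o u < fK o v.
Proof.
move=> /upsetP fo sio [a|] [b|] //= uv nuv.
- have ab : (a < b)%O by rewrite lt_neqAle uv andbT; apply: contra nuv => /eqP ->.
  have := rk_lt ab; have := rk_le a; have := rk_le b.
  case ao: (a \in o); first by rewrite (fo _ _ ao uv); lia.
  by case: (b \in o) => /=; lia.
- case/existsP: uv => s /andP [sS as_]; move: sS; rewrite inE => /andP [so _].
  case ao: (a \in o); first by rewrite (fo _ _ ao as_) in so.
  have := rk_le a; rewrite /=; lia.
- case/existsP: uv => s /andP [sS sb]; move: sS; rewrite inE => /andP [si _].
  by rewrite (fo _ _ (subsetP sio _ si) sb) /=; lia.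
Qed.

Lemma hK (o i : {set T}) : filters T o -> i \subset o -> forall A,
  filtersK o i A -> height (filtersK o i) setT A = #|T|.+1 - #|A|.
Proof.
move=> fo sio A fA; rewrite height_eq ?subsetT // ?card_optT //.
move=> X fX pX; apply: (ext_up (fK_rel fo sio)) => //.
by apply/upsetP => x y; rewrite !inE.
Qed.

Lemma hL (B : {set T}) : filters T B -> height (filters T) setT B = #|T| - #|B|.
Proof.
move=> fB; rewrite height_eq ?subsetT ?cardsT //.
move=> X fX pX; apply: (ext_up (@rk_rel _ T)) => //.
by apply/upsetP => x y; rewrite !inE.
Qed.

Lemma hD (i B : {set T}) : downK i B -> height (downK i) setT B = #|T| - #|B|.
Proof.
move=> fB; rewrite height_eq ?subsetT ?cardsT //.
move=> X /andP [fX siX] pX.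
have [x xX fx] := ext_up (@rk_rel _ T) (b := setT) (X := X)
   ltac:(by apply/upsetP => x y; rewrite !inE) fX pX.
exists x => //; apply/andP; split => //.
exact: subset_trans siX (subsetUr _ _).
Qed.

Lemma hU (o B : {set T}) : filters T o -> upK o B -> height (upK o) o B = #|o| - #|B|.
Proof.
move=> fo fB; rewrite height_eq //; first by case/andP: fB.
move=> X /andP [fX sXo] pX.
have [x xX fx] := ext_up (@rk_rel _ T) fo fX pX.
exists x => //; apply/andP; split => //.
move: xX; rewrite inE => /andP [_ xo].
by rewrite subUset sub1set xo sXo.
Qed.

End Main.
Local Open Scope ring_scope.

Theorem proposition1 (d : Order.disp_t) (T : finPOrderType d) (o i : {set T}) :
  is_cutting o i ->
  rgf (filtersK o i) setT (filtersK o i)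
    = rgf (filters T) setT (downK i) + 'X * rgf (filters T) setT (upK o)
  /\
  rgf (filters T) setT (downK i) + 'X * rgf (filters T) setT (upK o)
    = rgf (downK i) setT (downK i)
      + 'X^((height (filters T) setT o).+1) * rgf (upK o) o (upK o).
Proof.
move=> [fo [fi [sio _]]].
have EU : 'X * rgf (filters T) setT (upK o) =
   \sum_(B | upK o B) 'X^((#|T| - #|B|).+1) :> {poly int}.
  rewrite /rgf big_distrr /=; apply: eq_bigr => B /andP [fB _].
  by rewrite hL // exprS.
split.
- rewrite EU /rgf (bigID (fun A : {set option T} => None \in A)) /=; congr (_ + _).
  + rewrite (reindex_onto (fun B : {set T} => None |: Some @: B) (fun A : {set option T} => Some @^-1: A)).
      apply: eq_big => B.
        by rewrite filtersK_None // in_setU1 eqxx preim_None eqxx !andbT.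
      case/andP => /andP [fB _] _; rewrite filtersK_None // in fB.
      rewrite hK ?filtersK_None // card_None subSS hL //.
      by case/andP: fB.
    move=> A /andP [fA nA]; apply/setP => -[x|]; rewrite in_setU1 //=.
    by rewrite inSome inE.
  + rewrite (reindex_onto (fun B : {set T} => Some @: B) (fun A : {set option T} => Some @^-1: A)).
      apply: eq_big => B.
        by rewrite filtersK_Some // inNone preim_Some eqxx !andbT.
      case/andP => /andP [fB _] _; rewrite filtersK_Some // in fB.
      rewrite hK ?filtersK_Some // card_Some subSn //.
      exact: max_card.
    move=> A /andP [fA nA]; apply/setP => -[x|]; first by rewrite inSome inE.
    by rewrite inNone; apply/esym/negbTE.
- rewrite EU /rgf; congr (_ + _).
    apply: eq_bigr => B fB; rewrite hD // hL //; by case/andP: fB.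
  rewrite big_distrr /=; apply: eq_bigr => B /andP [fB sBo].
  rewrite hU //; last by rewrite /upK fB sBo.
  rewrite hL // -exprD; congr ('X^_).
  have h1 := max_card o; have h2 := subset_leq_card sBo.
  rewrite addSn; congr _.+1; rewrite addnBA // subnK //.
Qed.
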